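(* Let $(X,f)$ be a dynamical system and $\mathbf{a}=(a_1,\dots,a_r)\in\mathbb{N}^r$. The following are equivalent: (1) $(X,f)$ is $\mathbf{a}$-transitive; (2) $(X,f)$ is $\mathcal{F}[\mathbf{a}]$-transitive; (3) $(X,f)$ is transitive and $\mathcal{F}[\mathbf{a}]$-central.
   Context: A dynamical system is a pair $(X,f)$ with $X$ a compact metric space and $f:X\to X$ continuous. $\mathbb{N}=\{1,2,\dots\}$, $\mathbb{Z}_+=\{0,1,2,\dots\}$. $N(U,V)=\{n\in\mathbb{N}: U\cap f^{-n}(V)\neq\emptyset\}$. $(X,f)$ is transitive if $N(U,V)\neq\emptyset$ for all non-empty open $U,V$. For a family $\mathcal{F}$ of subsets of $\mathbb{N}$, $(X,f)$ is $\mathcal{F}$-transitive if $N(U,V)\in\mathcal{F}$ for all non-empty open $U,V$, and $\mathcal{F}$-central if $N(U,U)\in\mathcal{F}$ for all non-empty open $U$. For $\mathbf{a}\in\mathbb{N}^r$, $f^{(\mathbf{a})}=f^{a_1}\times\dots\times f^{a_r}:X^r\to X^r$, and $(X,f)$ is $\mathbf{a}$-transitive if $(X^r,f^{(\mathbf{a})})$ is transitive. $\mathcal{F}[\mathbf{a}]$ is the collection of all $F\subset\mathbb{N}$ such that for every $(n_1,\dots,n_r)\in\mathbb{Z}_+^r$ there exists $k\in\mathbb{N}$ with $ka_i+n_i\in F$ for all $i=1,\dots,r$. *)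

(* Defs.v *)
From Stdlib Require Import Reals List.
Open Scope R_scope.

Definition m_open (M : Metric_Space) (U : Base M -> Prop) : Prop :=
  forall x, U x -> exists eps, eps > 0 /\
    forall y, dist M x y < eps -> U y.

Definition m_compact (M : Metric_Space) : Prop :=
  forall (I : Type) (C : I -> Base M -> Prop),
    (forall i, m_open M (C i)) ->
    (forall x, exists i, C i x) ->
    exists l : list I, forall x, exists i, In i l /\ C i x.

Definition m_continuous (M : Metric_Space) (f : Base M -> Base M) : Prop :=
  forall x eps, eps > 0 -> exists delta, delta > 0 /\
    forall y, dist M x y < delta -> dist M (f x) (f y) < eps.

Definition dynamical_system (M : Metric_Space) (f : Base M -> Base M) : Prop :=
  m_compact M /\ m_continuous M f.

(* Index set {0,...,r-1}; X^r is (Fin r -> X) with the product topology. *)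
Definition Fin (r : nat) : Type := { i : nat | (i < r)%nat }.

Definition prod_open (M : Metric_Space) (r : nat) (W : (Fin r -> Base M) -> Prop) : Prop :=
  forall x, W x -> exists eps, eps > 0 /\
    forall y, (forall i, dist M (x i) (y i) < eps) -> W y.

Definition Nset {T : Type} (g : T -> T) (U V : T -> Prop) (n : nat) : Prop :=
  (1 <= n)%nat /\ exists x, U x /\ V (Nat.iter n g x).

Definition transitive_top {T : Type} (op : (T -> Prop) -> Prop) (g : T -> T) : Prop :=
  forall U V, op U -> op V -> (exists x, U x) -> (exists y, V y) ->
    exists n, Nset g U V n.

Definition transitive (M : Metric_Space) (f : Base M -> Base M) : Prop :=
  transitive_top (m_open M) f.

Definition F_transitive (M : Metric_Space) (f : Base M -> Base M)
  (F : (nat -> Prop) -> Prop) : Prop :=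
  forall U V, m_open M U -> m_open M V -> (exists x, U x) -> (exists y, V y) ->
    F (Nset f U V).

Definition F_central (M : Metric_Space) (f : Base M -> Base M)
  (F : (nat -> Prop) -> Prop) : Prop :=
  forall U, m_open M U -> (exists x, U x) -> F (Nset f U U).

Definition f_prod (M : Metric_Space) (f : Base M -> Base M) (r : nat)
  (a : Fin r -> nat) (x : Fin r -> Base M) : Fin r -> Base M :=
  fun i => Nat.iter (a i) f (x i).

Definition a_transitive (M : Metric_Space) (f : Base M -> Base M) (r : nat)
  (a : Fin r -> nat) : Prop :=
  transitive_top (prod_open M r) (f_prod M f r a).

Definition Fa (r : nat) (a : Fin r -> nat) (F : nat -> Prop) : Prop :=
  (forall m, F m -> (1 <= m)%nat) /\
  forall n : Fin r -> nat, exists k, (1 <= k)%nat /\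
    forall i, F (k * a i + n i)%nat.

(* Main.v *)
Require Import Defs.
From Stdlib Require Import Reals List Lra Lia ClassicalEpsilon.
Open Scope R_scope.

Section H.
Variable M : Metric_Space.

Lemma ball_open (x : Base M) e : m_open M (fun z => dist M x z < e).
Proof.
  intros z Hz. exists (e - dist M x z). split; [lra|].
  intros y Hy. pose proof (dist_tri M x y z). lra.
Qed.

Lemma full_open : m_open M (fun _ => True).
Proof. intros x _. exists 1. split; [lra|auto]. Qed.

Lemma inter_open U V : m_open M U -> m_open M V -> m_open M (fun z => U z /\ V z).
Proof.
  intros HU HV x [Ux Vx].
  destruct (HU x Ux) as [e1 [He1 H1]]. destruct (HV x Vx) as [e2 [He2 H2]].
  exists (Rmin e1 e2). split. { apply Rmin_pos; lra. }
  intros y Hy. split; [apply H1|apply H2]; pose proof (Rmin_l e1 e2); pose proof (Rmin_r e1 e2); lra.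
Qed.

Lemma pre_open g U : m_continuous M g -> m_open M U -> m_open M (fun z => U (g z)).
Proof.
  intros Hg HU x Ux. destruct (HU _ Ux) as [e [He H]].
  destruct (Hg x e He) as [d [Hd Hd']]. exists d. split; auto.
Qed.

Lemma iter_cont f n : m_continuous M f -> m_continuous M (Nat.iter n f).
Proof.
  intros Hf. induction n as [|n IH]; simpl.
  - intros x e He. exists e. split; auto.
  - unfold m_continuous. intros x e He. destruct (Hf (Nat.iter n f x) e He) as [d [Hd H1]].
    destruct (IH x d Hd) as [d' [Hd' H2]]. exists d'. split; auto.
    intros y Hy. apply H1. apply H2. exact Hy.
Qed.

Lemma trans_pre f : m_continuous M f -> transitive M f ->
  forall n V, m_open M V -> (exists y, V y) -> exists z, V (Nat.iter n f z).
Proof.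
  intros Hf Ht n. induction n as [|n IH]; intros V HV [y Vy].
  - exists y. exact Vy.
  - destruct (Ht (fun _ => True) V full_open HV (ex_intro _ y I) (ex_intro _ y Vy))
      as [m [Hm [x [_ Hx]]]].
    destruct (IH (fun z => V (f z))) as [z Hz].
    + apply pre_open; auto.
    + destruct m as [|m]; [lia|]. exists (Nat.iter m f x). exact Hx.
    + exists z. exact Hz.
Qed.

End H.

Lemma fprod_iter M f r a k x i :
  Nat.iter k (f_prod M f r a) x i = Nat.iter (k * a i) f (x i).
Proof.
  induction k as [|k IH]; [reflexivity|].
  rewrite Nat.iter_succ. unfold f_prod at 1. rewrite IH. rewrite <- Nat.iter_add.
  f_equal; simpl; lia.
Qed.

Lemma fin_min r (P : Fin r -> R -> Prop) :
  (forall i e e', 0 < e' <= e -> P i e -> P i e') ->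
  (forall i, exists e, e > 0 /\ P i e) ->
  exists e, e > 0 /\ forall i, P i e.
Proof.
  intros Hmono Hex.
  assert (forall m, exists e, e > 0 /\ forall i, (proj1_sig i < m)%nat -> P i e).
  { induction m as [|m [e [He IH]]].
    - exists 1. split; [lra|]. intros i Hi; lia.
    - destruct (Compare_dec.lt_dec m r) as [Hmr|Hmr].
      + destruct (Hex (exist _ m Hmr)) as [e' [He' H']].
        exists (Rmin e e'). split. { apply Rmin_pos; lra. }
        intros i Hi. pose proof (Rmin_l e e'); pose proof (Rmin_r e e').
        assert (0 < Rmin e e') by (apply Rmin_pos; lra).
        destruct (Nat.eq_dec (proj1_sig i) m) as [E|E].
        * destruct i as [i0 pi]; simpl in E; subst i0.
          assert (pi = Hmr) by apply Peano_dec.le_unique. subst pi.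
          apply (Hmono _ e'); auto; lra.
        * apply (Hmono _ e); [lra|]. apply IH; lia.
      + exists e. split; auto. intros i Hi. apply IH. destruct i; simpl in *; lia. }
  destruct (H r) as [e [He H']]. exists e. split; auto. intros i. apply H'. destruct i; simpl; auto.
Qed.

Lemma prod_opens M r (U : Fin r -> Base M -> Prop) :
  (forall i, m_open M (U i)) -> prod_open M r (fun x => forall i, U i (x i)).
Proof.
  intros HU x Hx.
  destruct (fin_min r (fun i e => forall y, dist M (x i) y < e -> U i y)) as [e [He H]].
  - intros i e e' He' H y Hy. apply H. lra.
  - intros i. apply (HU i (x i) (Hx i)).
  - exists e. split; auto.
Qed.

Lemma build M f r (U V : Fin r -> Base M -> Prop) (z0 : Base M) :
  m_continuous M f -> transitive M f ->
  (forall i, m_open M (U i)) -> (forall i, m_open M (V i)) ->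
  (forall i, exists x, U i x) -> (forall i, exists x, V i x) ->
  exists W (s t : Fin r -> nat), m_open M W /\ (exists w, W w) /\
    forall i, (t i <= s i)%nat /\ forall w, W w ->
      U i (Nat.iter (s i) f w) /\ V i (Nat.iter (t i) f w).
Proof.
  intros Hf Ht HU HV HUn HVn.
  assert (forall m, exists W (s t : Fin r -> nat), m_open M W /\ (exists w, W w) /\
    forall i, (proj1_sig i < m)%nat -> (t i <= s i)%nat /\ forall w, W w ->
      U i (Nat.iter (s i) f w) /\ V i (Nat.iter (t i) f w)).
  { induction m as [|m [W [s [t [HWo [HWn IH]]]]]].
    - exists (fun _ => True), (fun _ => O), (fun _ => O). split; [apply full_open|].
      split; [exists z0; auto|]. intros i Hi; lia.
    - destruct (Compare_dec.lt_dec m r) as [Hmr|Hmr].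
      + set (i0 := exist (fun i => (i < r)%nat) m Hmr).
        destruct (Ht (U i0) W (HU i0) HWo (HUn i0) HWn) as [p [Hp [x [Ux Wx]]]].
        set (W1 := fun z => U i0 z /\ W (Nat.iter p f z)).
        assert (HW1 : m_open M W1).
        { apply inter_open; auto. apply pre_open; auto. apply iter_cont; auto. }
        destruct (Ht (V i0) W1 (HV i0) HW1 (HVn i0) (ex_intro _ x (conj Ux Wx)))
          as [q [Hq [y [Vy W1y]]]].
        exists (fun z => V i0 z /\ W1 (Nat.iter q f z)).
        exists (fun j => if Nat.eq_dec (proj1_sig j) m then q else (s j + (p + q))%nat).
        exists (fun j => if Nat.eq_dec (proj1_sig j) m then O else (t j + (p + q))%nat).
        split. { apply inter_open; auto. apply pre_open; auto. apply iter_cont; auto. }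
        split. { exists y. split; auto. }
        intros i Hi. destruct (Nat.eq_dec (proj1_sig i) m) as [E|E].
        * assert (i = i0).
          { destruct i as [i1 pi]; simpl in E; subst i1. unfold i0. f_equal. apply Peano_dec.le_unique. }
          subst i. split; [lia|]. intros w [Vw [Uw _]]. simpl. auto.
        * destruct (IH i ltac:(lia)) as [Hst Hw]. split; [lia|].
          intros w [Vw [Uw Ww]].
          rewrite !(Nat.iter_add _ (p+q)), (Nat.iter_add p q). auto.
      + exists W, s, t. split; auto. split; auto. intros i Hi. apply IH.
        destruct i; simpl in *; lia. }
  destruct (H r) as [W [s [t [A [B C]]]]]. exists W, s, t. split; auto. split; auto.
  intros i. apply C. destruct i; simpl; auto.
Qed.

Lemma choice_fin {A B : Type} (P : A -> B -> Prop) :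
  (forall i, exists z, P i z) -> exists g : A -> B, forall i, P i (g i).
Proof.
  intros H. exists (fun i => proj1_sig (constructive_indefinite_description _ (H i))).
  intros i. exact (proj2_sig (constructive_indefinite_description _ (H i))).
Qed.

Lemma atrans_trans M f r a (Hr : (1 <= r)%nat) (Ha : forall i, (1 <= a i)%nat) :
  a_transitive M f r a -> transitive M f.
Proof.
  intros HA U V HU HV [x0 Ux0] [y0 Vy0].
  destruct (HA (fun x => forall i, U (x i)) (fun x => forall i, V (x i)))
    as [n [Hn [z [Az Bz]]]].
  - apply prod_opens; auto.
  - apply prod_opens; auto.
  - exists (fun _ => x0); auto.
  - exists (fun _ => y0); auto.
  - set (i0 := exist (fun i => (i < r)%nat) O Hr).
    exists (n * a i0)%nat. split. { pose proof (Ha i0). nia. }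
    exists (z i0). split; auto. rewrite <- fprod_iter. apply Bz.
Qed.

Theorem theorem4p6 (M : Metric_Space) (f : Base M -> Base M)
  (r : nat) (a : Fin r -> nat)
  (Hsys : dynamical_system M f)
  (Hr : (1 <= r)%nat)
  (Ha : forall i, (1 <= a i)%nat) :
  (a_transitive M f r a <-> F_transitive M f (Fa r a)) /\
  (F_transitive M f (Fa r a) <->
     (transitive M f /\ F_central M f (Fa r a))).
Proof.
  destruct Hsys as [_ Hf].
  set (i0 := exist (fun i => (i < r)%nat) O Hr).
  assert (D12 : a_transitive M f r a -> F_transitive M f (Fa r a)).
  { intros HA. pose proof (atrans_trans M f r a Hr Ha HA) as Ht.
    intros U V HU HV [x0 Ux0] [y0 Vy0]. split. { intros m [Hm _]; exact Hm. }
    intros n.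
    destruct (choice_fin (fun i z => V (Nat.iter (n i) f z))) as [g Hg].
    { intros i. apply (trans_pre M f Hf Ht); eauto. }
    destruct (HA (fun x => forall i, U (x i))
                 (fun x => forall i, V (Nat.iter (n i) f (x i))))
      as [k [Hk [z [Az Bz]]]].
    - apply prod_opens; auto.
    - apply (prod_opens M r (fun i z => V (Nat.iter (n i) f z))).
      intros i. apply pre_open; auto. apply iter_cont; auto.
    - exists (fun _ => x0); auto.
    - exists g; auto.
    - exists k. split; auto. intros i. split. { pose proof (Ha i). nia. }
      exists (z i). split; auto. specialize (Bz i). rewrite fprod_iter in Bz.
      rewrite <- Nat.iter_add in Bz. rewrite Nat.add_comm. exact Bz. }
  assert (D23 : F_transitive M f (Fa r a) -> transitive M f /\ F_central M f (Fa r a)).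
  { intros HF. split.
    - intros U V HU HV HUn HVn. destruct (HF U V HU HV HUn HVn) as [_ H].
      destruct (H (fun _ => O)) as [k [Hk Hk']]. eexists. apply (Hk' i0).
    - intros U HU HUn. apply HF; auto. }
  assert (D31 : transitive M f /\ F_central M f (Fa r a) -> a_transitive M f r a).
  { intros [Ht Hc] A B HA HB [x Ax] [y By].
    destruct (HA x Ax) as [e [He HeA]]. destruct (HB y By) as [e' [He' HeB]].
    destruct (build M f r (fun i z => dist M (x i) z < e) (fun i z => dist M (y i) z < e')
                (x i0) Hf Ht) as [W [s [t [HWo [HWn C]]]]].
    - intros i. apply ball_open.
    - intros i. apply ball_open.
    - intros i. exists (x i). rewrite (proj2 (dist_refl M _ _) eq_refl). lra.
    - intros i. exists (y i). rewrite (proj2 (dist_refl M _ _) eq_refl). lra.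
    - destruct (Hc W HWo HWn) as [_ HF].
      destruct (HF (fun i => (s i - t i)%nat)) as [k [Hk Hk']].
      destruct (choice_fin (fun i w => W w /\
                  W (Nat.iter (k * a i + (s i - t i)) f w))) as [g Hg].
      { intros i. destruct (Hk' i) as [_ H]. exact H. }
      exists k. split; auto. exists (fun i => Nat.iter (s i) f (g i)). split.
      + apply HeA. intros i. destruct (C i) as [_ Ci]. apply (Ci (g i)). apply Hg.
      + apply HeB. intros i. rewrite fprod_iter.
        destruct (C i) as [Hts Ci]. destruct (Ci _ (proj2 (Hg i))) as [_ Vi].
        rewrite <- Nat.iter_add. rewrite <- Nat.iter_add in Vi.
        replace (k * a i + s i)%nat with (t i + (k * a i + (s i - t i)))%nat by lia.
        exact Vi. }
  split; split; auto.
Qed.
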